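(* Let $N\ge2$, $U=-e^{2\pi i/N}\begin{pmatrix}1/2&-\sqrt{3}/2\\ \sqrt3/2&1/2\end{pmatrix}$, and $|\psi_i\rangle=(U^i|0\rangle)^{\otimes N}$ for $i=0,1,2$, each with prior $1/3$. With $\alpha=\tfrac13\big(1-(-\tfrac12)^{N-1}\big)$, the optimal minimum-error success probability for this ensemble equals $\big(\sqrt{2/3}\sqrt{1-\alpha}+\sqrt{1/3}\sqrt{\alpha}\big)^2$, which tends to $1$ as $N\to\infty$.
   Context: The optimal minimum-error success probability of an ensemble $\{|\psi_i\rangle,p_i\}_{i=0}^2$ is the maximum over all three-outcome POVMs $\{\Pi_i\}$ on $(\mathbb{C}^2)^{\otimes N}$ of $\sum_ip_i\langle\psi_i|\Pi_i|\psi_i\rangle$. *)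

(* Defs.v *)
(* complex numbers are modelled by algC (algebraic complex
   numbers), which contain every quantity occurring in the statement. *)
From HB Require Import structures.
From mathcomp Require Import all_boot all_order all_algebra all_field.
Set Implicit Arguments. Unset Strict Implicit. Unset Printing Implicit Defensive.
Import Order.TTheory GRing.Theory Num.Theory.
Local Open Scope ring_scope.

Definition adjmx {m n} (A : 'M[algC]_(m, n)) : 'M[algC]_(n, m) :=
  map_mx (@Num.conj _) A^T.

(* N-fold tensor power of a qubit vector v in (C^2)^{(x)N} = C^(2^N):
   the amplitude of the computational basis state |b_{N-1} ... b_0>
   (k = sum_j b_j 2^j) is prod_j v_{b_j}. *)
Definition tpow (N : nat) (v : 'cV[algC]_2) : 'cV[algC]_(2 ^ N) :=
  \col_(k < 2 ^ N) \prod_(j < N) v (inord ((k %/ 2 ^ j) %% 2)) 0.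

(* e^{2 pi i / N}: N.-root (-1) is the N-th root of -1 of minimal
   nonnegative argument, i.e. e^{i pi / N}; its square is e^{2 pi i / N}. *)
Definition omegaN (N : nat) : algC := (N.-root (-1)) ^+ 2.

Definition Umx (N : nat) : 'M[algC]_2 :=
  (- omegaN N) *: \matrix_(i < 2, j < 2)
     (if i == j then 1 / 2
      else if (i : nat) == 0%N then - (sqrtC 3 / 2) else sqrtC 3 / 2).

Definition ket0 : 'cV[algC]_2 := delta_mx 0 0.

Definition psi (N : nat) (i : 'I_3) : 'cV[algC]_(2 ^ N) :=
  tpow N (Umx N ^+ i *m ket0).

Definition psd {n} (A : 'M[algC]_n) : Prop :=
  adjmx A = A /\ forall x : 'cV[algC]_n, 0 <= (adjmx x *m A *m x) 0 0.

Definition POVM3 {n} (P : 'I_3 -> 'M[algC]_n) : Prop :=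
  (forall i, psd (P i)) /\ \sum_(i < 3) P i = 1%:M.

Definition succ_prob (N : nat) (P : 'I_3 -> 'M[algC]_(2 ^ N)) : algC :=
  \sum_(i < 3) (1 / 3) * (adjmx (psi N i) *m P i *m psi N i) 0 0.

Definition alphaN (N : nat) : algC := (1 / 3) * (1 - (- (1 / 2)) ^+ N.-1).

Definition Popt_formula (N : nat) : algC :=
  (sqrtC (2 / 3) * sqrtC (1 - alphaN N) + sqrtC (1 / 3) * sqrtC (alphaN N)) ^+ 2.

(* Main.v *)
Require Import Defs.
From HB Require Import structures.
From mathcomp Require Import all_boot all_order all_algebra all_field.
From mathcomp Require Import ring.
Import Order.TTheory GRing.Theory Num.Theory.
Local Open Scope ring_scope.

Definition ip {n} (u v : 'cV[algC]_n) : algC := (adjmx u *m v) 0 0.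
Definition frm {n} (u : 'cV[algC]_n) (A : 'M[algC]_n) (v : 'cV[algC]_n) : algC :=
  (adjmx u *m A *m v) 0 0.

Lemma adjmxE {m n} (A : 'M[algC]_(m, n)) i j : adjmx A i j = (A j i)^*.
Proof. by rewrite /adjmx !mxE. Qed.

Lemma adjmxD {m n} (A B : 'M[algC]_(m, n)) : adjmx (A + B) = adjmx A + adjmx B.
Proof. by apply/matrixP=> i j; rewrite !(adjmxE, mxE) rmorphD. Qed.

Lemma adjmxN {m n} (A : 'M[algC]_(m, n)) : adjmx (- A) = - adjmx A.
Proof. by apply/matrixP=> i j; rewrite !(adjmxE, mxE) rmorphN. Qed.

Lemma adjmxZ {m n} a (A : 'M[algC]_(m, n)) : adjmx (a *: A) = a^* *: adjmx A.
Proof. by apply/matrixP=> i j; rewrite !(adjmxE, mxE) rmorphM. Qed.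

Lemma adjmx_sum {m n} (I : finType) (F : I -> 'M[algC]_(m, n)) :
  adjmx (\sum_i F i) = \sum_i adjmx (F i).
Proof.
apply/matrixP=> i j; rewrite adjmxE !summxE rmorph_sum.
by apply: eq_bigr => k _; rewrite adjmxE.
Qed.

Lemma adjmxK {m n} (A : 'M[algC]_(m, n)) : adjmx (adjmx A) = A.
Proof. by apply/matrixP=> i j; rewrite !adjmxE conjCK. Qed.

Lemma adjmxM {m n p} (A : 'M[algC]_(m, n)) (B : 'M[algC]_(n, p)) :
  adjmx (A *m B) = adjmx B *m adjmx A.
Proof.
apply/matrixP=> i j; rewrite adjmxE !mxE rmorph_sum.
by apply: eq_bigr => k _; rewrite !adjmxE rmorphM mulrC.
Qed.

Lemma adjmx1 {n} : adjmx (1%:M : 'M[algC]_n) = 1%:M.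
Proof.
apply/matrixP=> i j; rewrite adjmxE !mxE eq_sym rmorphMn rmorph1 //.
Qed.

Lemma ipE {n} (u v : 'cV[algC]_n) : ip u v = \sum_i (u i 0)^* * v i 0.
Proof. by rewrite /ip mxE; apply: eq_bigr => i _; rewrite adjmxE. Qed.

Lemma ip_ge0 {n} (u : 'cV[algC]_n) : 0 <= ip u u.
Proof.
rewrite ipE; apply: sumr_ge0 => i _.
by rewrite mulrC -normCK exprn_ge0.
Qed.

Lemma ipC {n} (u v : 'cV[algC]_n) : ip v u = (ip u v)^*.
Proof.
rewrite !ipE rmorph_sum; apply: eq_bigr => i _.
by rewrite rmorphM /= conjCK mulrC.
Qed.

Lemma frm_outer {n} (x u w y : 'cV[algC]_n) :
  frm x (u *m adjmx w) y = ip x u * ip w y.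
Proof.
rewrite /frm /ip -!mulmxA mulmxA [in LHS]mxE big_ord1.
by [].
Qed.

Lemma frm1 {n} (x y : 'cV[algC]_n) : frm x 1%:M y = ip x y.
Proof. by rewrite /frm mulmx1. Qed.

Lemma frmD {n} (x y : 'cV[algC]_n) A B : frm x (A + B) y = frm x A y + frm x B y.
Proof. by rewrite /frm mulmxDr mulmxDl mxE. Qed.

Lemma frmN {n} (x y : 'cV[algC]_n) A : frm x (- A) y = - frm x A y.
Proof. by rewrite /frm mulmxN mulNmx mxE. Qed.

Lemma frm_sumA {n} (I : finType) (x y : 'cV[algC]_n) (A : I -> 'M_n) :
  frm x (\sum_i A i) y = \sum_i frm x (A i) y.
Proof. by rewrite /frm mulmx_sumr mulmx_suml summxE. Qed.

Lemma frm_lin {n} (I : finType) (v : I -> 'cV[algC]_n) (a b : I -> algC) A :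
  frm (\sum_j a j *: v j) A (\sum_k b k *: v k) =
  \sum_j \sum_k ((a j)^* * b k * frm (v j) A (v k)).
Proof.
rewrite /frm adjmx_sum -mulmxA mulmx_suml summxE; apply: eq_bigr => j _.
rewrite mulmxA.
rewrite adjmxZ -!scalemxAl mulmx_sumr mxE summxE big_distrr; apply: eq_bigr => k _.
by rewrite -scalemxAr /= [in LHS]mxE mulrA.
Qed.

Lemma psd_outer {n} (u : 'cV[algC]_n) : psd (u *m adjmx u).
Proof.
split; first by rewrite adjmxM adjmxK.
move=> x; rewrite -/(frm x _ x) frm_outer (ipC u x) mulrC -normCK.
exact: exprn_ge0.
Qed.

Notation o0 := (@Ordinal 3 0 isT).
Notation o1 := (@Ordinal 3 1 isT).
Notation o2 := (@Ordinal 3 2 isT).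

Lemma sum3 (R : nmodType) (F : 'I_3 -> R) : \sum_i F i = F o0 + F o1 + F o2.
Proof.
rewrite !big_ord_recr big_ord0 /= add0r.
by congr (_ + _ + _); congr (F _); apply/val_inj.
Qed.

Lemma ord3P (i : 'I_3) : [\/ i = o0, i = o1 | i = o2].
Proof.
case: i => [[|[|[|m]]] hi].
- by apply: Or31; apply/val_inj.
- by apply: Or32; apply/val_inj.
- by apply: Or33; apply/val_inj.
- by [].
Qed.

Definition Tm (p q : algC) (j k : 'I_3) : algC :=
  if j == k then (q + 2 * p) / (3 * p * q) else (q - p) / (3 * p * q).

Goal forall p q, Tm p q o1 o2 = (q - p) / (3 * p * q).
move=> p q. rewrite /Tm /=. done. Qed.

Definition dd (p q : algC) := (p + 2 * q) / 3.
Definition Dg (p q : algC) := (p ^+ 2 + 2 * q ^+ 2) / 3.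
Definition Eg (p q : algC) := (p ^+ 2 - q ^+ 2) / 3.
Definition fo (i : 'I_3) : 'I_3 := if i == o0 then o1 else o0.
Definition uu (i j : 'I_3) : algC := if j == i then 0 else if j == fo i then 1 else -1.
Definition ww (p q : algC) (i j : 'I_3) : algC :=
  if j == i then 2 * (q - p) / (p + 2 * q) else 1.
Definition al (p q : algC) := (p + 2 * q) / (6 * q).
Definition be (p q : algC) := (p + 2 * q) ^+ 2 / (18 * p * q).

Lemma frm_linR {n} (I : finType) (v : I -> 'cV[algC]_n) (a : I -> algC) A :
  (forall j, (a j)^* = a j) ->
  frm (\sum_j a j *: v j) A (\sum_k a k *: v k) =
  \sum_j \sum_k (a j * a k * frm (v j) A (v k)).
Proof.
move=> ha; rewrite frm_lin; apply: eq_bigr => j _; apply: eq_bigr => k _.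
by rewrite ha.
Qed.

Lemma conj_uu i j : (uu i j)^* = uu i j.
Proof. rewrite /uu; case: ifP => _; [|case: ifP => _]; by rewrite ?rmorph0 ?rmorph1 ?rmorphN1. Qed.

Lemma conj_ww [p q] i j : p^* = p -> q^* = q -> (ww p q i j)^* = ww p q i j.
Proof.
move=> hp hq; rewrite /ww; case: ifP => _; rewrite ?rmorph1 //.
by rewrite !(rmorphM, rmorphB, rmorphD, rmorph_nat, fmorphV) /= rmorph1 hp hq.
Qed.

Lemma frm_bound n (ψ : 'I_3 -> 'cV[algC]_n) p q (P : 'M[algC]_n) i :
  0 < p -> 0 < q -> psd P ->
  frm (ψ i) P (ψ i) <= dd p q * \sum_j \sum_k Tm p q j k * frm (ψ j) P (ψ k).
Proof.
move=> hp hq hP.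
have hpr : p^* = p by apply: geC0_conj; apply: ltW.
have hqr : q^* = q by apply: geC0_conj; apply: ltW.
have p0 : p != 0 by rewrite gt_eqF.
have q0 : q != 0 by rewrite gt_eqF.
have pq0 : p + 2 * q != 0 by rewrite gt_eqF // addr_gt0 // mulr_gt0.
have e : dd p q * \sum_j \sum_k Tm p q j k * frm (ψ j) P (ψ k) - frm (ψ i) P (ψ i)
   = al p q * frm (\sum_j uu i j *: ψ j) P (\sum_k uu i k *: ψ k)
   + be p q * frm (\sum_j ww p q i j *: ψ j) P (\sum_k ww p q i k *: ψ k).
  rewrite (frm_linR _ _ _ _ (conj_uu i)) (frm_linR _ _ _ _ (fun j => conj_ww i j hpr hqr)).
  rewrite !sum3 /Tm /uu /ww /al /be /dd /fo.
  by case: (ord3P i) => [->|->|->] /=; field; rewrite ?p0 ?q0 ?pq0 ?pnatr_eq0.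
rewrite -subr_ge0 e addr_ge0 // mulr_ge0 //.
- by rewrite /al divr_ge0 // ?addr_ge0 ?mulr_ge0 // ltW.
- exact: hP.2.
- by rewrite /be divr_ge0 // ?exprn_ge0 ?addr_ge0 ?mulr_ge0 // ltW.
- exact: hP.2.
Qed.

Lemma upper_bound n (ψ : 'I_3 -> 'cV[algC]_n) p q (P : 'I_3 -> 'M[algC]_n) :
  0 < p -> 0 < q ->
  (forall j k, ip (ψ j) (ψ k) = if j == k then Dg p q else Eg p q) ->
  POVM3 P ->
  \sum_i 1 / 3 * frm (ψ i) (P i) (ψ i) <= dd p q ^+ 2.
Proof.
move=> hp hq hG [hP hS].
have p0 : p != 0 by rewrite gt_eqF.
have q0 : q != 0 by rewrite gt_eqF.
have E1 : \sum_i \sum_j \sum_k Tm p q j k * frm (ψ j) (P i) (ψ k)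
        = \sum_j \sum_k Tm p q j k * ip (ψ j) (ψ k).
  rewrite exchange_big; apply: eq_bigr => j _.
  rewrite exchange_big; apply: eq_bigr => k _.
  by rewrite -mulr_sumr -frm_sumA hS frm1.
have E : \sum_i 1 / 3 * (dd p q * \sum_j \sum_k Tm p q j k * frm (ψ j) (P i) (ψ k))
         = dd p q ^+ 2.
  rewrite -mulr_sumr -mulr_sumr E1.
  under eq_bigr do under eq_bigr do rewrite hG.
  rewrite !sum3 /Tm /Dg /Eg /dd /=.
  by field; rewrite ?p0 ?q0 ?pnatr_eq0.
rewrite -E; apply: ler_sum => i _; apply: ler_wpM2l.
  by rewrite divr_ge0 ?ler0n.
exact: frm_bound.
Qed.

Definition outer {n} (u : 'cV[algC]_n) := u *m adjmx u.
Definition mu {n} (ψ : 'I_3 -> 'cV[algC]_n) p q (i : 'I_3) : 'cV[algC]_n :=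
  \sum_j Tm p q j i *: ψ j.
Definition Pm {n} (ψ : 'I_3 -> 'cV[algC]_n) p q (i : 'I_3) : 'M[algC]_n :=
  if i == o0 then 1%:M - outer (mu ψ p q o1) - outer (mu ψ p q o2)
  else outer (mu ψ p q i).

Lemma ip_linl {n} (I : finType) (v : I -> 'cV[algC]_n) (a : I -> algC) y :
  ip (\sum_j a j *: v j) y = \sum_j (a j)^* * ip (v j) y.
Proof.
rewrite /ip adjmx_sum mulmx_suml summxE; apply: eq_bigr => j _.
by rewrite adjmxZ -scalemxAl mxE.
Qed.

Lemma conj_Tm [p q] j k : p^* = p -> q^* = q -> (Tm p q j k)^* = Tm p q j k.
Proof.
move=> hp hq; rewrite /Tm; case: ifP => _;
by rewrite !(rmorphM, rmorphB, rmorphD, rmorph_nat, fmorphV) /= rmorph1 hp hq.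
Qed.

Lemma bessel {n} (x m1 m2 : 'cV[algC]_n) :
  ip m1 m1 = 1 -> ip m2 m2 = 1 -> ip m1 m2 = 0 -> ip m2 m1 = 0 ->
  0 <= ip x x - ip x m1 * ip m1 x - ip x m2 * ip m2 x.
Proof.
move=> h11 h22 h12 h21.
pose v (j : 'I_3) := if j == o0 then x else if j == o1 then m1 else m2.
pose a (j : 'I_3) := if j == o0 then 1 else if j == o1 then - ip m1 x else - ip m2 x.
have := ip_ge0 (\sum_j a j *: v j).
rewrite -frm1 frm_lin !sum3 /a /v /= !frm1 h11 h22 h12 h21.
rewrite (ipC m1 x) (ipC m2 x) /= ?rmorphN ?rmorph1 /= ?conjCK => H.
apply: (le_trans H); rewrite le_eqVlt; apply/orP; left; apply/eqP; ring.
Qed.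

Lemma achieve n (ψ : 'I_3 -> 'cV[algC]_n) p q :
  0 < p -> 0 < q ->
  (forall j k, ip (ψ j) (ψ k) = if j == k then Dg p q else Eg p q) ->
  POVM3 (Pm ψ p q) /\ \sum_i 1 / 3 * frm (ψ i) (Pm ψ p q i) (ψ i) = dd p q ^+ 2.
Proof.
move=> hp hq hG.
have hpr : p^* = p by apply: geC0_conj; apply: ltW.
have hqr : q^* = q by apply: geC0_conj; apply: ltW.
have p0 : p != 0 by rewrite gt_eqF.
have q0 : q != 0 by rewrite gt_eqF.
have hM : forall a b, ip (mu ψ p q a) (mu ψ p q b) = if a == b then 1 else 0.
  move=> a b; rewrite -frm1 /mu frm_lin.
  under eq_bigr do under eq_bigr do rewrite frm1 hG (conj_Tm _ _ hpr hqr).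
  rewrite !sum3 /Tm /Dg /Eg.
  by case: (ord3P a) => [->|->|->]; case: (ord3P b) => [->|->|->] /=; field;
    rewrite ?p0 ?q0 ?pnatr_eq0.
have hMp : forall a i, ip (mu ψ p q a) (ψ i) = if a == i then dd p q else (p - q) / 3.
  move=> a i; rewrite /mu ip_linl.
  under eq_bigr do rewrite hG (conj_Tm _ _ hpr hqr).
  rewrite !sum3 /Tm /Dg /Eg /dd.
  by case: (ord3P a) => [->|->|->]; case: (ord3P i) => [->|->|->] /=; field;
    rewrite ?p0 ?q0 ?pnatr_eq0.
split.
  split.
    move=> i; rewrite /Pm; case: ifP => _; last exact: psd_outer.
    split; first by rewrite !adjmxD !adjmxN adjmx1 /outer !adjmxM !adjmxK.
    move=> x; rewrite -/(frm x _ x) !frmD !frmN frm1 /outer !frm_outer.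
    apply: bessel; by rewrite hM.
  rewrite sum3 /Pm /=.
  by rewrite (addrAC _ (- _)) subrK subrK.
rewrite sum3 /Pm /= !frmD !frmN frm1 /outer !frm_outer.
rewrite !(ipC (mu ψ p q _) (ψ _)) !hMp !hG /=.
rewrite !(rmorphM, rmorphB, rmorphD, rmorph_nat, fmorphV) /= rmorph1 hpr hqr.
by rewrite /Dg /dd; field; rewrite ?pnatr_eq0.
Qed.

Lemma bit_shift (i N j : nat) : (j < N)%N ->
  ((i + 2 ^ N) %/ 2 ^ j %% 2 = i %/ 2 ^ j %% 2)%N.
Proof.
move=> hj.
have e : (2 ^ N = 2 ^ (N - j).-1 * 2 * 2 ^ j)%N.
  rewrite -expnSr prednK ?subn_gt0 // -expnD subnK //; exact: ltnW.
rewrite e addnC divnMDl ?expn_gt0 // modnMDl //.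
Qed.

Lemma bit_top (i N : nat) : (i < 2 ^ N)%N -> ((i + 2 ^ N) %/ 2 ^ N %% 2 = 1)%N.
Proof.
move=> hi; rewrite -{1}(mul1n (2 ^ N)%N) addnC divnMDl ?expn_gt0 //.
by rewrite divn_small.
Qed.

Lemma sum_bits (h : nat -> algC) N :
  \sum_(k < 2 ^ N) \prod_(j < N) h ((k %/ 2 ^ j) %% 2)%N = (h 0%N + h 1%N) ^+ N.
Proof.
elim: N => [|N IH]; first by rewrite expn0 big_ord1 big_ord0 expr0.
rewrite -(big_mkord xpredT (fun k => \prod_(j < N.+1) h ((k %/ 2 ^ j) %% 2)%N)).
rewrite expnS mul2n -addnn (big_cat_nat (n := (2 ^ N)%N) (leq0n _) (leq_addr _ _)).
have -> : forall F : nat -> algC, \sum_(2 ^ N <= i < 2 ^ N + 2 ^ N) F i = \sum_(0 <= i < 2 ^ N) F (i + 2 ^ N)%N.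
  by move=> F; rewrite -{1}[(2 ^ N)%N]add0n big_addn addnK.
rewrite exprS mulrC mulrDr -IH !big_mkord.
rewrite !mulr_suml; congr (_ + _); apply: eq_big => // k _.
- rewrite big_ord_recr /= divn_small // mulrC; congr (_ * _).
- rewrite big_ord_recr /= bit_top //; congr (_ * _).
  by apply: eq_bigr => j _; rewrite bit_shift.
Qed.

Notation t0 := (@Ordinal 2 0 isT).
Notation t1 := (@Ordinal 2 1 isT).

Lemma sum2 (R : nmodType) (F : 'I_2 -> R) : \sum_i F i = F t0 + F t1.
Proof.
rewrite !big_ord_recr big_ord0 /= add0r.
by congr (_ + _); congr (_ _); apply/val_inj.
Qed.

Lemma ip2 (v w : 'cV[algC]_2) : ip v w = (v t0 0)^* * w t0 0 + (v t1 0)^* * w t1 0.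
Proof. by rewrite ipE sum2. Qed.

Lemma ip_tpow N (v w : 'cV[algC]_2) : ip (tpow N v) (tpow N w) = (ip v w) ^+ N.
Proof.
rewrite ipE.
under eq_bigr => k _ do rewrite !mxE rmorph_prod -big_split /=.
rewrite (sum_bits (fun b => (v (inord b) 0)^* * w (inord b) 0)) ip2.
have -> : (inord 0 : 'I_2) = t0 by apply/val_inj; rewrite /= inordK.
have -> : (inord 1 : 'I_2) = t1 by apply/val_inj; rewrite /= inordK.
by [].
Qed.

Lemma Umx_app N (x : 'cV[algC]_2) :
 (Umx N *m x) t0 0 = - omegaN N * (1/2 * x t0 0 - sqrtC 3 / 2 * x t1 0) /\
 (Umx N *m x) t1 0 = - omegaN N * (sqrtC 3 / 2 * x t0 0 + 1/2 * x t1 0).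
Proof. by rewrite !mxE !sum2 !mxE /=; split; ring. Qed.

Lemma r_trick (a b K : algC) : a - b = K * (sqrtC 3 ^+ 2 - 3) -> a = b.
Proof. by rewrite sqrtCK subrr mulr0 => /eqP; rewrite subr_eq0 => /eqP. Qed.

Lemma ket0E : ket0 t0 0 = 1 /\ ket0 t1 0 = 0.
Proof. by rewrite /ket0 !mxE. Qed.

Lemma v1E N : (Umx N ^+ 1 *m ket0) t0 0 = - omegaN N / 2 /\
              (Umx N ^+ 1 *m ket0) t1 0 = - omegaN N * sqrtC 3 / 2.
Proof.
rewrite expr1; have [-> ->] := Umx_app N ket0; have [-> ->] := ket0E.
by split; ring.
Qed.

Lemma v2E N : (Umx N ^+ 2 *m ket0) t0 0 = - omegaN N ^+ 2 / 2 /\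
              (Umx N ^+ 2 *m ket0) t1 0 = omegaN N ^+ 2 * sqrtC 3 / 2.
Proof.
rewrite expr2 -mulmxA; have [-> ->] := Umx_app N (Umx N *m ket0).
have [e1 e2] := v1E N; rewrite expr1 in e1 e2; rewrite e1 e2.
by split; [apply: (r_trick _ _ (- omegaN N ^+ 2 / 4)); field | field].
Qed.

Lemma omN [N] : (0 < N)%N -> omegaN N ^+ N = 1.
Proof. by move=> hN; rewrite /omegaN exprAC rootCK // sqrrN expr1n. Qed.

Lemma omcN [N] : (0 < N)%N -> (omegaN N)^* ^+ N = 1.
Proof. by move=> hN; rewrite -rmorphXn omN // rmorph1. Qed.

Lemma r3c : (sqrtC 3 : algC)^* = sqrtC 3.
Proof. by apply: geC0_conj; rewrite sqrtC_ge0 ler0n. Qed.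

Definition cN (N : nat) : algC := (- (1 / 2)) ^+ N.

Lemma powfix (w z s x : algC) a b N : w ^+ N = 1 -> z ^+ N = 1 ->
  x = w ^+ a * z ^+ b * s -> x ^+ N = s ^+ N.
Proof.
move=> hw hz ->; rewrite !exprMn -!exprM [(a * N)%N]mulnC [(b * N)%N]mulnC.
by rewrite !exprM hw hz !expr1n !mul1r.
Qed.

Lemma powfix1 (w z x : algC) a b N : w ^+ N = 1 -> z ^+ N = 1 ->
  x = w ^+ a * z ^+ b -> x ^+ N = 1.
Proof.
move=> hw hz hx; rewrite (@powfix w z 1 x a b N hw hz) ?expr1n //.
by rewrite hx mulr1.
Qed.

Lemma gram N i j : (0 < N)%N ->
  ip (psi N i) (psi N j) = if i == j then 1 else cN N.
Proof.
move=> hN; rewrite /psi ip_tpow ip2.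
have [a0 a1] := ket0E; have [b0 b1] := v1E N; have [c0 c1] := v2E N.
have h0 : Umx N ^+ 0 *m ket0 = ket0 by rewrite expr0 mul1mx.
have hw := omN hN; have hz := omcN hN.
case: (ord3P i) => ->; case: (ord3P j) => -> /=;
  rewrite ?h0 ?a0 ?a1 ?b0 ?b1 ?c0 ?c1 /cN;
  move: hw hz; generalize (omegaN N) => w hw hz;
  rewrite !(rmorphM, rmorphN, rmorphXn, fmorphV, rmorph_nat, rmorph1, rmorph0) /= ?r3c.
- by apply: (@powfix1 _ _ _ 0 0 _ hw hz); field.
- by apply: (@powfix _ _ _ _ 1 0 _ hw hz); field.
- by apply: (@powfix _ _ _ _ 2 0 _ hw hz); field.
- by apply: (@powfix _ _ _ _ 0 1 _ hw hz); field.
- apply: (@powfix1 _ _ _ 1 1 _ hw hz).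
  by apply: (r_trick _ _ (w * w^* / 4)); field.
- apply: (@powfix _ _ _ _ 2 1 _ hw hz).
  by apply: (r_trick _ _ (- w ^+ 2 * w^* / 4)); field.
- by apply: (@powfix _ _ _ _ 0 2 _ hw hz); field.
- apply: (@powfix _ _ _ _ 1 2 _ hw hz).
  by apply: (r_trick _ _ (- w * w^* ^+ 2 / 4)); field.
- apply: (@powfix1 _ _ _ 2 2 _ hw hz).
  by apply: (r_trick _ _ (w ^+ 2 * w^* ^+ 2 / 4)); field.
Qed.

Lemma half_ge0 : 0 <= (1 / 2 : algC).
Proof. by rewrite divr_ge0 ?ler01 ?ler0n. Qed.

Lemma cN_real N : cN N \is Num.real.
Proof. by rewrite /cN rpredX // rpredN ger0_real // half_ge0. Qed.

Lemma cN_norm N : `|cN N| = (1 / 2) ^+ N.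
Proof. by rewrite /cN normrX normrN ger0_norm // half_ge0. Qed.

Lemma cN_le N : (2 <= N)%N -> `|cN N| <= 1 / 4.
Proof.
move=> hN; rewrite cN_norm.
have -> : (1 / 4 : algC) = (1 / 2) ^+ 2 by field.
apply: ler_wiXn2l => //; first exact: half_ge0.
by rewrite ler_pdivrMr ?ltr0n // mul1r ler1n.
Qed.

Lemma c_bounds (c : algC) : c \is Num.real -> `|c| <= 1 / 4 ->
  0 < 1 + 2 * c /\ 0 < 1 - c.
Proof.
move=> hr hc.
have h1 : - c <= 1 / 4 by apply: le_trans hc; rewrite -normrN real_ler_norm ?rpredN.
have h2 : c <= 1 / 4 by apply: le_trans hc; rewrite real_ler_norm.
split.
  have : 2 * (- c) <= 2 * (1 / 4) by rewrite ler_pM2l ?ltr0n.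
  rewrite mulrN => h; rewrite -[2 * c]opprK subr_gt0.
  apply: le_lt_trans h _.
  have -> : 2 * (1 / 4) = (1 / 2 : algC) by field.
  by rewrite ltr_pdivrMr ?ltr0n // mul1r ltr1n.
rewrite subr_gt0; apply: le_lt_trans h2 _.
by rewrite ltr_pdivrMr ?ltr0n // mul1r ltr1n.
Qed.

Lemma DgE (c : algC) : Dg (sqrtC (1 + 2 * c)) (sqrtC (1 - c)) = 1.
Proof. by rewrite /Dg !sqrtCK; field. Qed.

Lemma EgE (c : algC) : Eg (sqrtC (1 + 2 * c)) (sqrtC (1 - c)) = c.
Proof. by rewrite /Eg !sqrtCK; field. Qed.

Lemma popt_eq N : (2 <= N)%N ->
  Popt_formula N = dd (sqrtC (1 + 2 * cN N)) (sqrtC (1 - cN N)) ^+ 2.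
Proof.
move=> hN.
have [h1 h2] := @c_bounds (cN N) (cN_real N) (cN_le N hN).
have ha : alphaN N = 1 / 3 * (1 + 2 * cN N).
  by case: N hN {h1 h2} => // M _; rewrite /alphaN /cN exprS /=; field.
have hb : 1 - alphaN N = 2 / 3 * (1 - cN N) by rewrite ha; field.
rewrite /Popt_formula hb ha.
have n13 : (1 / 3 : algC) \is Num.nneg by rewrite nnegrE divr_ge0 ?ler01 ?ler0n.
have n23 : (2 / 3 : algC) \is Num.nneg by rewrite nnegrE divr_ge0 ?ler0n.
have s1 : sqrtC (2 / 3 * (1 - cN N)) = sqrtC (2 / 3) * sqrtC (1 - cN N).
  by rewrite sqrtCM // nnegrE ltW.
have s2 : sqrtC (1 / 3 * (1 + 2 * cN N)) = sqrtC (1 / 3) * sqrtC (1 + 2 * cN N).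
  by rewrite sqrtCM // nnegrE ltW.
rewrite s1 s2 !mulrA -!expr2 !sqrtCK /dd.
by congr (_ ^+ 2); field.
Qed.

Lemma limit_bound (c : algC) : c \is Num.real -> `|c| <= 1 / 4 ->
  `|dd (sqrtC (1 + 2 * c)) (sqrtC (1 - c)) ^+ 2 - 1| <= 2 * `|c|.
Proof.
move=> hr hc; have [h1 h2] := @c_bounds c hr hc.
set p := sqrtC (1 + 2 * c); set q := sqrtC (1 - c).
have hp2 : p ^+ 2 = 1 + 2 * c by rewrite sqrtCK.
have hq2 : q ^+ 2 = 1 - c by rewrite sqrtCK.
set x := (1 + 2 * c) * (1 - c).
have hpq : p * q = sqrtC x by rewrite sqrtCM // nnegrE ltW.
have hx0 : 0 <= x by rewrite mulr_ge0 // ltW.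
have e : dd p q ^+ 2 - 1 = (4 * (p * q - 1) - 2 * c) / 9.
  transitivity ((p ^+ 2 + 4 * (p * q) + 4 * q ^+ 2) / 9 - 1); first by rewrite /dd; field.
  by rewrite hp2 hq2; field.
have hs : `|sqrtC x - 1| <= `|x - 1|.
  have ex : x - 1 = (sqrtC x - 1) * (sqrtC x + 1) by rewrite -{1}(sqrtCK x); ring.
  rewrite ex normrM ler_peMr ?normr_ge0 //.
  rewrite ger0_norm ?addr_ge0 ?sqrtC_ge0 //.
  by rewrite lerDr sqrtC_ge0.
have hx1 : `|x - 1| <= 3 / 2 * `|c|.
  have -> : x - 1 = c * (1 - 2 * c) by rewrite /x; ring.
  rewrite normrM mulrC ler_wpM2r ?normr_ge0 //.
  apply: le_trans (ler_normB _ _) _.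
  rewrite normr1 normrM normr_nat.
  have : 2 * `|c| <= 2 * (1 / 4) by rewrite ler_pM2l ?ltr0n.
  move=> h; apply: le_trans (lerD (lexx 1) h) _.
  have -> : 1 + 2 * (1 / 4) = (3 / 2 : algC) by field.
  exact: lexx.
rewrite e normrM normfV normr_nat.
have hb : `|4 * (p * q - 1) - 2 * c| <= 4 * (3 / 2 * `|c|) + 2 * `|c|.
  apply: le_trans (ler_normB _ _) _.
  rewrite !normrM !normr_nat hpq.
  apply: lerD => //; rewrite ler_pM2l ?ltr0n //.
  exact: le_trans hs hx1.
rewrite ler_pdivrMr ?ltr0n //.
apply: le_trans hb _.
have -> : 4 * (3 / 2 * `|c|) + 2 * `|c| = 8 * `|c| by field.
by rewrite mulrAC ler_wpM2r ?normr_ge0 // -natrM ler_nat.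
Qed.

Theorem mainTheorem12 :
  (forall N : nat, (2 <= N)%N ->
     (exists P : 'I_3 -> 'M[algC]_(2 ^ N),
        POVM3 P /\ succ_prob P = Popt_formula N) /\
     (forall P : 'I_3 -> 'M[algC]_(2 ^ N),
        POVM3 P -> succ_prob P <= Popt_formula N)) /\
  (forall eps : algC, 0 < eps ->
     exists N0 : nat, forall N : nat, (N0 <= N)%N ->
       `|Popt_formula N - 1| < eps).
Proof.
split.
  move=> N hN.
  have [h1 h2] := @c_bounds (cN N) (cN_real N) (cN_le N hN).
  set p := sqrtC (1 + 2 * cN N); set q := sqrtC (1 - cN N).
  have hp : 0 < p by rewrite sqrtC_gt0.
  have hq : 0 < q by rewrite sqrtC_gt0.
  have hN0 : (0 < N)%N by apply: leq_trans hN.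
  have hG : forall j k, ip (psi N j) (psi N k) = if j == k then Dg p q else Eg p q.
    by move=> j k; rewrite gram // DgE EgE.
  rewrite popt_eq //; split.
    have [hP hs] := @achieve _ (psi N) p q hp hq hG.
    by exists (Pm (psi N) p q); split.
  by move=> P hP; apply: upper_bound.
move=> eps he.
pose K := Num.Def.archi_bound (2 / eps).
have hK : 2 / eps < K%:R by apply: archi_boundP; rewrite divr_ge0 ?ler0n // ltW.
exists K.+2 => N hN.
have hN2 : (2 <= N)%N by apply: leq_trans hN.
rewrite popt_eq //; apply: le_lt_trans (@limit_bound (cN N) (cN_real N) (cN_le N hN2)) _.
rewrite cN_norm expr_div_n expr1n mulrA mulr1 ltr_pdivrMr ?exprn_gt0 ?ltr0n //.
have hNK : (K < N)%N by apply: leq_trans hN.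
have h2N : (N%:R : algC) < 2 ^+ N by rewrite -natrX ltr_nat ltn_expl.
rewrite -ltr_pdivrMl //.
rewrite mulrC; apply: lt_trans hK _; apply: lt_trans h2N.
by rewrite ltr_nat.
Qed.
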